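(* Let $(H,B_1,B_2)$ be a Rota-Baxter system of Hopf algebras with cocycle $\sigma$. Then $B_1\circ\sigma=B_1$ and $B_2\circ\sigma=B_2$. Furthermore, $\sigma$ is idempotent and is a coalgebra homomorphism.
   Context: $\mathbb{F}$ is a field of characteristic $0$; Sweedler notation $\Delta(a)=a_1\otimes a_2$. A coalgebra homomorphism $f$ satisfies $\Delta(f(a))=f(a_1)\otimes f(a_2)$, $\epsilon(f(a))=\epsilon(a)$. A Rota-Baxter system of Hopf algebras is a triple $(H,B_1,B_2)$ where $(H,\cdot,1,\Delta,\epsilon,S)$ is a cocommutative Hopf algebra and $B_1,B_2:H\to H$ are coalgebra homomorphisms with $B_1(1)=B_2(1)=1$ such that for all $a,b\in H$: $B_1(a)B_1(b)=B_1(B_1(a_1)bS(B_2(a_2)))$ and $B_2(a)B_2(b)=B_2(B_1(a_1)bS(B_2(a_2)))$. Its cocycle is $\sigma:H\to H$, $\sigma(a)=B_1(a_1)S(B_2(a_2))$. *)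

(* Defs.v *)
(* Tensors H (x) H (resp. H (x) H (x) H) are represented by finite lists of
   pure tensors (Sweedler sums), two lists being identified iff they agree
   under every bilinear (resp. trilinear) map into every F-vector space; this
   is exactly equality in the tensor product. *)
From HB Require Import structures.
From mathcomp Require Import all_boot all_order all_algebra.
Set Implicit Arguments. Unset Strict Implicit. Unset Printing Implicit Defensive.
Import GRing.Theory.
Local Open Scope ring_scope.

Definition bilinear_map (F : fieldType) (H W : lmodType F) (f : H -> H -> W) :=
  (forall x y1 y2 (k : F), f x (k *: y1 + y2) = k *: f x y1 + f x y2) /\
  (forall x1 x2 y (k : F), f (k *: x1 + x2) y = k *: f x1 y + f x2 y).

Definition trilinear_map (F : fieldType) (H W : lmodType F)
    (f : H -> H -> H -> W) :=
  (forall x1 x2 y z (k : F), f (k *: x1 + x2) y z = k *: f x1 y z + f x2 y z) /\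
  (forall x y1 y2 z (k : F), f x (k *: y1 + y2) z = k *: f x y1 z + f x y2 z) /\
  (forall x y z1 z2 (k : F), f x y (k *: z1 + z2) = k *: f x y z1 + f x y z2).

Definition teq2 (F : fieldType) (H : lmodType F) (s t : seq (H * H)) : Prop :=
  forall (W : lmodType F) (f : H -> H -> W), bilinear_map f ->
    \sum_(p <- s) f p.1 p.2 = \sum_(p <- t) f p.1 p.2.

Definition teq3 (F : fieldType) (H : lmodType F) (s t : seq (H * H * H)) : Prop :=
  forall (W : lmodType F) (f : H -> H -> H -> W), trilinear_map f ->
    \sum_(p <- s) f p.1.1 p.1.2 p.2 = \sum_(p <- t) f p.1.1 p.1.2 p.2.

(* (H, *, 1, D, e, S) is a cocommutative Hopf algebra over F;
   D a is a Sweedler sum representing Delta(a) = a_1 (x) a_2. *)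
Record cocomm_hopf (F : fieldType) (H : algType F)
    (D : H -> seq (H * H)) (e : H -> F) (S : H -> H) : Prop := {
  D_linear : forall (k : F) a b,
    teq2 (D (k *: a + b)) ([seq (k *: p.1, p.2) | p <- D a] ++ D b);
  e_linear : forall (k : F) a b, e (k *: a + b) = k * e a + e b;
  D_coassoc : forall a,
    teq3 [seq (q.1, q.2, p.2) | p <- D a, q <- D p.1]
         [seq (p.1, q.1, q.2) | p <- D a, q <- D p.2];
  e_counitl : forall a, \sum_(p <- D a) e p.1 *: p.2 = a;
  e_counitr : forall a, \sum_(p <- D a) e p.2 *: p.1 = a;
  D_cocomm : forall a, teq2 (D a) [seq (p.2, p.1) | p <- D a];
  D_one : teq2 (D 1) [:: (1, 1)];
  D_mul : forall a b,
    teq2 (D (a * b)) [seq (p.1 * q.1, p.2 * q.2) | p <- D a, q <- D b];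
  e_one : e 1 = 1;
  e_mul : forall a b, e (a * b) = e a * e b;
  S_linear : forall (k : F) a b, S (k *: a + b) = k *: S a + S b;
  S_antipodel : forall a, \sum_(p <- D a) S p.1 * p.2 = (e a)%:A;
  S_antipoder : forall a, \sum_(p <- D a) p.1 * S p.2 = (e a)%:A
}.

Definition coalg_hom (F : fieldType) (H : algType F)
    (D : H -> seq (H * H)) (e : H -> F) (f : H -> H) : Prop :=
  (forall (k : F) a b, f (k *: a + b) = k *: f a + f b) /\
  (forall a, teq2 (D (f a)) [seq (f p.1, f p.2) | p <- D a]) /\
  (forall a, e (f a) = e a).

Definition RB_system (F : fieldType) (H : algType F)
    (D : H -> seq (H * H)) (e : H -> F) (S : H -> H) (B1 B2 : H -> H) : Prop :=
  cocomm_hopf D e S /\ coalg_hom D e B1 /\ coalg_hom D e B2 /\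
  B1 1 = 1 /\ B2 1 = 1 /\
  (forall a b, B1 a * B1 b = \sum_(p <- D a) B1 (B1 p.1 * b * S (B2 p.2))) /\
  (forall a b, B2 a * B2 b = \sum_(p <- D a) B2 (B1 p.1 * b * S (B2 p.2))).

Definition cocycle (F : fieldType) (H : algType F)
    (D : H -> seq (H * H)) (S : H -> H) (B1 B2 : H -> H) (a : H) : H :=
  \sum_(p <- D a) B1 p.1 * S (B2 p.2).

(* Main.v *)
Require Import Defs.
From HB Require Import structures.
From mathcomp Require Import all_boot all_order all_algebra.
Import GRing.Theory.
Local Open Scope ring_scope.

Definition lin {F : fieldType} {V W : lmodType F} (f : V -> W) :=
  forall (k : F) x y, f (k *: x + y) = k *: f x + f y.

Section LinGen.
Variable F : fieldType.
Local Set Implicit Arguments.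

Lemma lin0 (V W : lmodType F) (f : V -> W) : lin f -> f 0 = 0.
Proof.
move=> Hf; have h := Hf 1 0 0; rewrite !scale1r addr0 in h.
have := congr1 (fun z => z - f 0) h; rewrite subrr addrK => <-; done.
Qed.

Lemma linD (V W : lmodType F) (f : V -> W) : lin f -> forall x y, f (x + y) = f x + f y.
Proof. by move=> Hf x y; have := Hf 1 x y; rewrite !scale1r. Qed.

Lemma linZ (V W : lmodType F) (f : V -> W) : lin f -> forall k x, f (k *: x) = k *: f x.
Proof. by move=> Hf k x; have := Hf k x 0; rewrite !addr0 (lin0 Hf) addr0. Qed.

Lemma lin_sum (V W : lmodType F) (f : V -> W) (I : Type) (r : seq I) (P : pred I) (G : I -> V) :
  lin f -> f (\sum_(i <- r | P i) G i) = \sum_(i <- r | P i) f (G i).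
Proof.
move=> Hf; elim: r => [|x r IH]; first by rewrite !big_nil (lin0 Hf).
by rewrite !big_cons; case: (P x) => //; rewrite (linD Hf) IH.
Qed.

Lemma lin_id (V : lmodType F) : lin (fun x : V => x).
Proof. by []. Qed.

Lemma lin_fun (U V W : lmodType F) (psi : V -> W) (phi : U -> V) :
  lin psi -> lin phi -> lin (fun x => psi (phi x)).
Proof. by move=> Hp Hq k x y; rewrite Hq Hp. Qed.

Lemma lin_scale (V W : lmodType F) (phi : V -> W) (c : F) :
  lin phi -> lin (fun x => c *: phi x).
Proof. by move=> Hq k x y; rewrite Hq scalerDr !scalerA mulrC. Qed.

Lemma lin_mull (V : lmodType F) (H : algType F) (phi : V -> H) (c : H) :
  lin phi -> lin (fun x => c * phi x).
Proof. by move=> Hq k x y; rewrite Hq mulrDr scalerAr. Qed.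

Lemma lin_mulr (V : lmodType F) (H : algType F) (phi : V -> H) (c : H) :
  lin phi -> lin (fun x => phi x * c).
Proof. by move=> Hq k x y; rewrite Hq mulrDl scalerAl. Qed.

Lemma lin_bil1 (V W : lmodType F) (H : lmodType F) (f : H -> H -> W) (phi : V -> H) y :
  (forall y, lin (fun x => f x y)) -> lin phi -> lin (fun x => f (phi x) y).
Proof. by move=> Hf Hq k x z; rewrite Hq Hf. Qed.

Lemma lin_bil2 (V W : lmodType F) (H : lmodType F) (f : H -> H -> W) (phi : V -> H) y :
  (forall y, lin (f y)) -> lin phi -> lin (fun x => f y (phi x)).
Proof. by move=> Hf Hq k x z; rewrite Hq Hf. Qed.

Lemma bilinP (H W : lmodType F) (f : H -> H -> W) :
  (forall y, lin (fun x => f x y)) -> (forall x, lin (f x)) -> bilinear_map f.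
Proof. by move=> H1 H2; split=> *; [rewrite H2 | rewrite H1]. Qed.

Lemma trilinP (H W : lmodType F) (f : H -> H -> H -> W) :
  (forall y z, lin (fun x => f x y z)) -> (forall x z, lin (fun y => f x y z)) ->
  (forall x y, lin (f x y)) -> trilinear_map f.
Proof. by move=> H1 H2 H3; split; [|split] => *; [rewrite H1|rewrite H2|rewrite H3]. Qed.

End LinGen.
Arguments bilinP {F H W f}.
Arguments trilinP {F H W f}.
Arguments lin_sum {F V W f I r P G}.
Arguments lin_fun {F U V W psi phi}.

Section C2Sec.
Variables (F : fieldType) (H : algType F) (D : H -> seq (H * H)) (e : H -> F) (S : H -> H).
Hypothesis hopf : cocomm_hopf D e S.

Definition C2 {W : lmodType F} (a : H) (g : H -> H -> W) : W := \sum_(p <- D a) g p.1 p.2.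

Lemma C2_ext {W : lmodType F} {a} {g g' : H -> H -> W} :
  (forall x y, g x y = g' x y) -> C2 a g = C2 a g'.
Proof. by move=> E; apply: eq_bigr => p _; rewrite E. Qed.

Lemma C2_Z {W : lmodType F} {a} {g : H -> H -> W} {k} :
  C2 a (fun x y => k *: g x y) = k *: C2 a g.
Proof. by rewrite /C2 scaler_sumr. Qed.

Lemma C2_pull {V W : lmodType F} {a} {g : H -> H -> V} {psi : V -> W} :
  lin psi -> psi (C2 a g) = C2 a (fun x y => psi (g x y)).
Proof. by move=> Hp; rewrite /C2 lin_sum. Qed.

Lemma C2_exch {W : lmodType F} {a b} {g : H -> H -> H -> H -> W} :
  C2 a (fun x y => C2 b (fun u v => g x y u v)) = C2 b (fun u v => C2 a (fun x y => g x y u v)).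
Proof. by rewrite /C2 exchange_big. Qed.

Lemma S_lin : lin S.
Proof. by move=> k x y; rewrite (S_linear hopf). Qed.

Lemma C2_linear {W : lmodType F} {g : H -> H -> W} :
  (forall y, lin (fun x => g x y)) -> (forall x, lin (g x)) -> lin (fun a => C2 a g).
Proof.
move=> H1 H2 k a b; rewrite /C2 (D_linear hopf k a b (bilinP H1 H2)) big_cat big_map /=.
by rewrite scaler_sumr; congr (_ + _); apply: eq_bigr => p _; rewrite (linZ (H1 _)).
Qed.

Lemma C2_coassoc {W : lmodType F} {a} {g : H -> H -> H -> W} :
  (forall y z, lin (fun x => g x y z)) -> (forall x z, lin (fun y => g x y z)) ->
  (forall x y, lin (g x y)) ->
  C2 a (fun x y => C2 x (fun u v => g u v y)) = C2 a (fun x y => C2 y (fun u v => g x u v)).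
Proof.
move=> H1 H2 H3; have := D_coassoc hopf a (trilinP H1 H2 H3).
by rewrite !big_allpairs_dep /=.
Qed.

Lemma C2_cocomm {W : lmodType F} {a} {g : H -> H -> W} :
  (forall y, lin (fun x => g x y)) -> (forall x, lin (g x)) ->
  C2 a g = C2 a (fun x y => g y x).
Proof.
move=> H1 H2; have := D_cocomm hopf a (bilinP H1 H2).
by rewrite big_map /=.
Qed.

Lemma C2_counitl {W : lmodType F} {a} {phi : H -> W} :
  lin phi -> C2 a (fun x y => e x *: phi y) = phi a.
Proof.
move=> Hp; rewrite -{2}(e_counitl hopf a) lin_sum //.
by apply: eq_bigr => p _; rewrite (linZ Hp).
Qed.

Lemma C2_counitr {W : lmodType F} {a} {phi : H -> W} :
  lin phi -> C2 a (fun x y => e y *: phi x) = phi a.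
Proof.
move=> Hp; rewrite -{2}(e_counitr hopf a) lin_sum //.
by apply: eq_bigr => p _; rewrite (linZ Hp).
Qed.

Lemma C2_mul {W : lmodType F} {a b} {g : H -> H -> W} :
  (forall y, lin (fun x => g x y)) -> (forall x, lin (g x)) ->
  C2 (a * b) g = C2 a (fun x y => C2 b (fun u v => g (x * u) (y * v))).
Proof.
move=> H1 H2; have := D_mul hopf a b (bilinP H1 H2).
by rewrite big_allpairs_dep /=.
Qed.

Lemma C2_one {W : lmodType F} {g : H -> H -> W} :
  (forall y, lin (fun x => g x y)) -> (forall x, lin (g x)) ->
  C2 1 g = g 1 1.
Proof.
move=> H1 H2; have := D_one hopf (bilinP H1 H2).
by rewrite big_seq1.
Qed.

Lemma C2_antil a : C2 a (fun x y => S x * y) = (e a)%:A.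
Proof. exact: (S_antipodel hopf). Qed.

Lemma C2_antir a : C2 a (fun x y => x * S y) = (e a)%:A.
Proof. exact: (S_antipoder hopf). Qed.

Lemma C2_hom {B : H -> H} {W : lmodType F} {z} {g : H -> H -> W} :
  coalg_hom D e B ->
  (forall y, lin (fun x => g x y)) -> (forall x, lin (g x)) ->
  C2 (B z) g = C2 z (fun x y => g (B x) (B y)).
Proof.
move=> [_ [HB _]] H1 H2; have := HB z _ g (bilinP H1 H2).
by rewrite big_map /=.
Qed.

Lemma lin_S {V : lmodType F} {phi : V -> H} : lin phi -> lin (fun x => S (phi x)).
Proof. move=> Hp; apply: lin_fun => //; exact: S_lin. Qed.

Lemma lin_C2a {V W : lmodType F} {g : H -> H -> W} {phi : V -> H} :
  (forall y, lin (fun x => g x y)) -> (forall x, lin (g x)) -> lin phi ->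
  lin (fun t => C2 (phi t) g).
Proof. move=> H1 H2 Hp; exact: (lin_fun (psi := fun a => C2 a g) (C2_linear H1 H2) Hp). Qed.

Lemma lin_C2g {V W : lmodType F} {a} {g : V -> H -> H -> W} :
  (forall u v, lin (fun t => g t u v)) -> lin (fun t => C2 a (g t)).
Proof.
move=> Hg k x y; rewrite /C2 scaler_sumr -big_split /=.
by apply: eq_bigr => p _; rewrite Hg.
Qed.


Ltac solve_lin :=
  intros;
  match goal with
  | |- lin ?f =>
    let f' := eval cbv beta in f in change (lin f');
    first
      [ exact: lin_id
      | assumption
      | match goal with Hh : _ |- _ => solve [apply: Hh] end
      | (apply: lin_S; solve_lin)
      | (apply: lin_mull; solve_lin)
      | (apply: lin_mulr; solve_lin)
      | (apply: lin_scale; solve_lin)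
      | (apply: lin_C2a; solve_lin)
      | (apply: lin_C2g; solve_lin)
      | (apply: lin_bil1; solve_lin)
      | (apply: lin_bil2; solve_lin)
      | (apply: lin_fun; [assumption | solve_lin]) ]
  end.

Lemma R_swap12 {W : lmodType F} {a} {g : H -> H -> H -> W} :
  (forall y z, lin (fun x => g x y z)) -> (forall x z, lin (fun y => g x y z)) ->
  (forall x y, lin (g x y)) ->
  C2 a (fun x y => C2 y (fun u v => g x u v)) = C2 a (fun x y => C2 y (fun u v => g u x v)).
Proof.
move=> H1 H2 H3.
rewrite -(C2_coassoc (g := g)) //.
have E x y : C2 x (fun u v => g u v y) = C2 x (fun u v => g v u y).
  by apply: C2_cocomm; solve_lin.
under C2_ext => x y do rewrite E.
rewrite C2_coassoc //; solve_lin.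
Qed.

Lemma K_lem {W : lmodType F} (h : H -> H -> W) :
  (forall y, lin (fun x => h x y)) -> (forall x, lin (h x)) -> forall d',
  C2 d' (fun a2 d => C2 d (fun a3 a4 => C2 a2 (fun r1 r2 => h (r1 * S a3) (r2 * S a4))))
  = e d' *: h 1 1.
Proof.
move=> H1 H2 d'.
under C2_ext => a2 d do rewrite C2_exch.
rewrite (C2_coassoc (g := fun r1 r2 d => C2 d (fun a3 a4 => h (r1 * S a3) (r2 * S a4)))); try solve_lin.
have E r1 z : C2 z (fun r2 d => C2 d (fun a3 a4 => h (r1 * S a3) (r2 * S a4)))
   = C2 z (fun x y => C2 y (fun u v => h (r1 * S x) (u * S v))).
  by rewrite (R_swap12 (g := fun r2 a3 a4 => h (r1 * S a3) (r2 * S a4))) //; solve_lin.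
under C2_ext => r1 z do rewrite E.
rewrite -(C2_coassoc (g := fun r1 x y => C2 y (fun u v => h (r1 * S x) (u * S v)))); try solve_lin.
have E2 X y : C2 X (fun r1 x => C2 y (fun u v => h (r1 * S x) (u * S v))) = e X *: (e y *: h 1 1).
  rewrite C2_exch.
  have E3 u v : C2 X (fun r1 x => h (r1 * S x) (u * S v)) = e X *: h 1 (u * S v).
    rewrite -(C2_pull (psi := fun z => h z (u * S v))) //.
    by rewrite C2_antir (linZ (H1 _)).
  under C2_ext => u v do rewrite E3.
  rewrite C2_Z -(C2_pull (psi := h 1)) // C2_antir (linZ (H2 _)) //.
under C2_ext => X y do rewrite E2.
rewrite C2_counitl //.
move=> k x y; rewrite (e_linear hopf) scalerDl scalerA //.
Qed.
Lemma DS_lem {W : lmodType F} (f : H -> H -> W) :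
  (forall y, lin (fun x => f x y)) -> (forall x, lin (f x)) -> forall a,
  C2 (S a) f = C2 a (fun x y => f (S x) (S y)).
Proof.
move=> H1 H2 a.
transitivity (C2 a (fun c d => C2 c (fun a1 a2 => C2 d (fun a3 a4 => C2 (S a1)
   (fun q1 q2 => C2 a2 (fun r1 r2 => f (q1 * r1 * S a3) (q2 * r2 * S a4))))))).
  symmetry.
  rewrite (C2_coassoc (g := fun a1 a2 d => C2 d (fun a3 a4 => C2 (S a1)
     (fun q1 q2 => C2 a2 (fun r1 r2 => f (q1 * r1 * S a3) (q2 * r2 * S a4)))))); try solve_lin.
  have K' q1 q2 d' : C2 d' (fun a2 d => C2 d (fun a3 a4 => C2 a2
      (fun r1 r2 => f (q1 * r1 * S a3) (q2 * r2 * S a4)))) = e d' *: f q1 q2.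
    have -> : e d' *: f q1 q2 = e d' *: (fun x y => f (q1 * x) (q2 * y)) 1 1 by rewrite /= !mulr1.
    rewrite -(K_lem (fun x y => f (q1 * x) (q2 * y))); try solve_lin.
    apply: C2_ext => a2 d; apply: C2_ext => a3 a4; apply: C2_ext => r1 r2.
    by rewrite /= !mulrA.
  have E1 a1 d' : C2 d' (fun a2 d => C2 d (fun a3 a4 => C2 (S a1) (fun q1 q2 =>
      C2 a2 (fun r1 r2 => f (q1 * r1 * S a3) (q2 * r2 * S a4))))) = e d' *: C2 (S a1) f.
    under C2_ext => a2 d do rewrite C2_exch.
    rewrite C2_exch.
    under C2_ext => q1 q2 do rewrite K'.
    by rewrite C2_Z.
  under C2_ext => a1 d' do rewrite E1.
  rewrite C2_counitr //; solve_lin.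
under C2_ext => c d do rewrite C2_exch.
have M a3 a4 a1 a2 : C2 (S a1) (fun q1 q2 => C2 a2 (fun r1 r2 => f (q1 * r1 * S a3) (q2 * r2 * S a4)))
   = C2 (S a1 * a2) (fun t1 t2 => f (t1 * S a3) (t2 * S a4)).
  by rewrite C2_mul //; solve_lin.
have E2 c d : C2 d (fun a3 a4 => C2 c (fun a1 a2 => C2 (S a1) (fun q1 q2 =>
    C2 a2 (fun r1 r2 => f (q1 * r1 * S a3) (q2 * r2 * S a4)))))
    = e c *: C2 d (fun a3 a4 => f (S a3) (S a4)).
  rewrite -C2_Z; apply: C2_ext => a3 a4.
  under C2_ext => a1 a2 do rewrite M.
  rewrite -(C2_pull (psi := fun z => C2 z (fun t1 t2 => f (t1 * S a3) (t2 * S a4)))); try solve_lin.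
  rewrite C2_antil (linZ (C2_linear _ _)); try solve_lin.
  by rewrite C2_one ?mul1r //; solve_lin.
under C2_ext => c d do rewrite E2.
rewrite C2_counitl //; solve_lin.
Qed.
Lemma mid_swap {W : lmodType F} {a} (Q : H -> H -> H -> H -> W) :
  (forall y u v, lin (fun x => Q x y u v)) -> (forall x u v, lin (fun y => Q x y u v)) ->
  (forall x y v, lin (fun u => Q x y u v)) -> (forall x y u, lin (Q x y u)) ->
  C2 a (fun c d => C2 c (fun x y => C2 d (fun u v => Q x y u v)))
  = C2 a (fun c d => C2 c (fun x u => C2 d (fun y v => Q x y u v))).
Proof.
move=> Q1 Q2 Q3 Q4.
rewrite (C2_coassoc (g := fun x y d => C2 d (fun u v => Q x y u v))); try solve_lin.
have E x z : C2 z (fun y d => C2 d (fun u v => Q x y u v))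
           = C2 z (fun p d => C2 d (fun q v => Q x q p v)).
  by rewrite (R_swap12 (g := fun y u v => Q x y u v)) //; solve_lin.
under C2_ext => x z do rewrite E.
rewrite -(C2_coassoc (g := fun x p d => C2 d (fun q v => Q x q p v))) //; solve_lin.
Qed.

Lemma e_add x y : e (x + y) = e x + e y.
Proof. by have := e_linear hopf 1 x y; rewrite scale1r mul1r. Qed.

Lemma e_0 : e 0 = 0.
Proof.
have h := e_add 0 0; rewrite addr0 in h.
by have := congr1 (fun z => z - e 0) h; rewrite subrr addrK.
Qed.

Lemma e_Z k x : e (k *: x) = k * e x.
Proof. by have := e_linear hopf k x 0; rewrite !addr0 e_0 addr0. Qed.

Lemma e_sum (I : Type) (r : seq I) (G : I -> H) :
  e (\sum_(i <- r) G i) = \sum_(i <- r) e (G i).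
Proof.
elim: r => [|x r IH]; first by rewrite !big_nil e_0.
by rewrite !big_cons e_add IH.
Qed.

Lemma eS a : e (S a) = e a.
Proof.
have h := congr1 e (S_antipodel hopf a).
rewrite e_sum (e_Z) (e_one hopf) mulr1 in h.
rewrite -h -{1}(e_counitr hopf a) (lin_sum S_lin) e_sum.
apply: eq_bigr => p _; rewrite (linZ S_lin) e_Z (e_mul hopf) mulrC //.
Qed.

Lemma B_lin {B} : coalg_hom D e B -> lin B.
Proof. by move=> [HB _] k x y; rewrite HB. Qed.

Lemma main_in (B1 B2 : H -> H) :
  coalg_hom D e B1 -> coalg_hom D e B2 -> B1 1 = 1 -> B2 1 = 1 ->
  (forall a b, B1 a * B1 b = \sum_(p <- D a) B1 (B1 p.1 * b * S (B2 p.2))) ->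
  (forall a b, B2 a * B2 b = \sum_(p <- D a) B2 (B1 p.1 * b * S (B2 p.2))) ->
  let sigma := cocycle D S B1 B2 in
  (forall a, B1 (sigma a) = B1 a) /\
  (forall a, B2 (sigma a) = B2 a) /\
  (forall a, sigma (sigma a) = sigma a) /\
  coalg_hom D e sigma.
Proof.
move=> HB1 HB2 B11 B21 RB1 RB2 sigma.
have LB1 := B_lin HB1; have LB2 := B_lin HB2.
have eB1 := HB1.2.2; have eB2 := HB2.2.2.
pose sg := fun x y => B1 x * S (B2 y).
have sigE a : sigma a = C2 a sg by [].
have P1 a : B1 (sigma a) = B1 a.
  rewrite /sigma /cocycle (lin_sum LB1).
  have := RB1 a 1; rewrite B11 mulr1 => ->.
  by apply: eq_bigr => p _; rewrite mulr1.
have P2 a : B2 (sigma a) = B2 a.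
  rewrite /sigma /cocycle (lin_sum LB2).
  have := RB2 a 1; rewrite B21 mulr1 => ->.
  by apply: eq_bigr => p _; rewrite mulr1.
have Hlin : forall (k : F) a b, sigma (k *: a + b) = k *: sigma a + sigma b.
  move=> k a b; rewrite !sigE.
  have L : lin (fun a => C2 a sg) by apply: C2_linear; rewrite /sg; solve_lin.
  exact: L.
have He : forall a, e (sigma a) = e a.
  move=> a; rewrite /sigma /cocycle e_sum.
  under eq_bigr => p _ do rewrite (e_mul hopf) eS eB1 eB2.
  rewrite -{2}(e_counitl hopf a) e_sum.
  by apply: eq_bigr => p _; rewrite e_Z.
have HD : forall a, teq2 (D (sigma a)) [seq (sigma p.1, sigma p.2) | p <- D a].
  move=> a W f [Hf2 Hf1].
  have H1 : forall y, lin (fun x => f x y) by move=> y k x z; rewrite Hf1.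
  have H2 : forall x, lin (f x) by move=> x k y z; rewrite Hf2.
  rewrite big_map.
  change (C2 (C2 a sg) f = C2 a (fun x y => f (C2 x sg) (C2 y sg))).
  rewrite (C2_pull (psi := fun z => C2 z f)); last by apply: C2_linear.
  have E x y : C2 (sg x y) f = C2 x (fun u v => C2 y (fun s t =>
       f (B1 u * S (B2 s)) (B1 v * S (B2 t)))).
    rewrite /sg C2_mul; try solve_lin.
    rewrite (C2_hom HB1); try solve_lin.
    apply: C2_ext => u v.
    rewrite DS_lem; try solve_lin.
    by rewrite (C2_hom HB2); try solve_lin.
  under C2_ext => x y do rewrite E.
  rewrite (mid_swap (fun u v s t => f (B1 u * S (B2 s)) (B1 v * S (B2 t)))); try solve_lin.
  apply: C2_ext => x y.
  rewrite (C2_pull (psi := fun z => f z (C2 y sg))) //.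
  apply: C2_ext => u s.
  by rewrite (C2_pull (psi := f _)).
have Hco : coalg_hom D e sigma by split; [|split].
split; first exact: P1.
split; first exact: P2.
split=> //.
move=> a.
have bil : bilinear_map sg by apply: bilinP; rewrite /sg; solve_lin.
have := HD a _ sg bil; rewrite big_map /= => h.
rewrite {1}sigE /C2 h.
by apply: eq_bigr => p _; rewrite /sg P1 P2.
Qed.

End C2Sec.

Theorem mainTheorem4 (F : fieldType) (H : algType F)
    (D : H -> seq (H * H)) (e : H -> F) (S : H -> H) (B1 B2 : H -> H) :
  [pchar F] =i pred0 ->
  RB_system D e S B1 B2 ->
  let sigma := cocycle D S B1 B2 in
  (forall a, B1 (sigma a) = B1 a) /\
  (forall a, B2 (sigma a) = B2 a) /\
  (forall a, sigma (sigma a) = sigma a) /\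
  coalg_hom D e sigma.
Proof.
move=> _ [hopf [HB1 [HB2 [B11 [B21 [RB1 RB2]]]]]].
exact: (@main_in F H D e S hopf B1 B2 HB1 HB2 B11 B21 RB1 RB2).
Qed.
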